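(* Let $\mathfrak{h}_3$ be the (real, 3-dimensional) Heisenberg Lie algebra and $\mathrm{ad}^*$ its coadjoint representation on the dual space $\mathfrak{h}_3^*$. Up to isometric Lie algebra isomorphism, every butterfly algebra is $\mathfrak{b}_6=\mathfrak{h}_3\oplus_{\mathrm{ad}^*}\mathfrak{h}_3^*$ with the bilinear form $$(X+X^*,\,Y+Y^* )=X^*(Y)+Y^*(X)$$ for $X,Y\in\mathfrak{h}_3$ and $X^*,Y^*\in\mathfrak{h}_3^*$.
   Context: A butterfly algebra is a real 2-step nilpotent Lie algebra of dimension $6$ endowed with a symmetric bilinear form $(\cdot,\cdot)$ that is invariant, i.e. $([X,Y],Z)=-(Y,[X,Z])$, such that some element of its commutator subalgebra is not in the radical $\{X\mid (X,\cdot)=0\}$ of the form. The semidirect sum $\mathfrak{h}_3\oplus_{\mathrm{ad}^*}\mathfrak{h}_3^*$ is the vector space $\mathfrak{h}_3\oplus\mathfrak{h}_3^*$ with bracket $[X+\xi,Y+\eta]=[X,Y]+\mathrm{ad}^*(X)\eta-\mathrm{ad}^*(Y)\xi$, where $\mathrm{ad}^*(X)\eta=-\eta\circ\mathrm{ad}(X)$, and $\mathfrak{h}_3^*$ is an abelian ideal. *)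

(* Defs.v *)
From HB Require Import structures.
From mathcomp Require Import all_boot all_order all_algebra.
From mathcomp Require Import reals.
Set Implicit Arguments. Unset Strict Implicit. Unset Printing Implicit Defensive.
Import Order.TTheory GRing.Theory Num.Theory.
Local Open Scope ring_scope.

Section Abstract.
Variables (R : realType) (V : vectType R).

Definition lie_bracket (br : V -> V -> V) : Prop :=
  [/\ forall (a : R) x y z, br (a *: x + y) z = a *: br x z + br y z,
      forall (a : R) x y z, br x (a *: y + z) = a *: br x y + br x z,
      forall x, br x x = 0 &
      forall x y z, br x (br y z) + br y (br z x) + br z (br x y) = 0].

Definition two_step_nilpotent (br : V -> V -> V) : Prop :=
  (forall x y z, br (br x y) z = 0) /\ (exists x y, br x y != 0).

Definition sym_bilinear (B : V -> V -> R) : Prop :=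
  (forall (a : R) x y z, B (a *: x + y) z = a * B x z + B y z) /\
  (forall x y, B x y = B y x).

Definition invariant_form (br : V -> V -> V) (B : V -> V -> R) : Prop :=
  forall x y z, B (br x y) z = - B y (br x z).

Definition in_commutator (br : V -> V -> V) (Z : V) : Prop :=
  exists (n : nat) (xs ys : 'I_n -> V), Z = \sum_(i < n) br (xs i) (ys i).

Definition in_radical (B : V -> V -> R) (Z : V) : Prop :=
  forall W, B Z W = 0.

Definition butterfly_algebra (br : V -> V -> V) (B : V -> V -> R) : Prop :=
  [/\ \dim (fullv : {vspace V}) = 6%N,
      lie_bracket br /\ two_step_nilpotent br,
      sym_bilinear B, invariant_form br B &
      exists Z, in_commutator br Z /\ ~ in_radical B Z].
End Abstract.

Section Model.
Variable R : realType.

(* h3 = R^3 with basis e_0,e_1,e_2 and [e_0,e_1] = e_2 *)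
Definition h3 := 'rV[R]_3.
Definition h3br (x y : h3) : h3 :=
  \row_(j < 3) (if j == 2%N :> nat then x 0 0 * y 0 1 - x 0 1 * y 0 0 else 0).

(* h3^* represented by coordinates in the dual basis; pairing xi(Y) *)
Definition h3dual := 'rV[R]_3.
Definition dpair (xi : h3dual) (y : h3) : R := \sum_(i < 3) xi 0 i * y 0 i.

(* ad^*(X) eta = - eta o ad(X), in dual-basis coordinates:
   its j-th coordinate is (ad^*(X) eta)(e_j) = - eta([X, e_j]) *)
Definition adstar (x : h3) (eta : h3dual) : h3dual :=
  \row_(j < 3) (- dpair eta (h3br x (delta_mx 0 j))).

Definition b6 := (h3 * h3dual)%type.

Definition b6br (u v : b6) : b6 :=
  (h3br u.1 v.1, adstar u.1 v.2 - adstar v.1 u.2).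

Definition b6form (u v : b6) : R := dpair u.2 v.1 + dpair v.2 u.1.
End Model.

Definition isometric_iso (R : realType) (V : vectType R)
    (br : V -> V -> V) (B : V -> V -> R) (phi : V -> b6 R) : Prop :=
  [/\ forall (a : R) x y, phi (a *: x + y) =
        (a *: (phi x).1 + (phi y).1, a *: (phi x).2 + (phi y).2),
      bijective phi,
      forall x y, phi (br x y) = b6br (phi x) (phi y) &
      forall x y, b6form (phi x) (phi y) = B x y].

(* Main.v *)
Require Import Defs.
From HB Require Import structures.
From mathcomp Require Import all_boot all_order all_algebra.
From mathcomp Require Import reals ring lra.
From Stdlib Require Import Classical.
Set Implicit Arguments. Unset Strict Implicit. Unset Printing Implicit Defensive.
Import Order.TTheory GRing.Theory Num.Theory.
Local Open Scope ring_scope.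

Section Basic.
Variables (R : realType) (V : vectType R) (br : V -> V -> V) (B : V -> V -> R).
Hypotheses (Hbr : lie_bracket br) (Hnil : forall x y z, br (br x y) z = 0)
  (HB : sym_bilinear B) (Hinv : invariant_form br B).

Lemma Bsym x y : B x y = B y x. Proof. by case: HB. Qed.
Lemma BDl x y z : B (x + y) z = B x z + B y z.
Proof. by case: HB => H _; have := H 1 x y z; rewrite scale1r mul1r. Qed.
Lemma B0l z : B 0 z = 0.
Proof. have h := BDl 0 0 z; rewrite addr0 in h; lra. Qed.
Lemma BZl k x z : B (k *: x) z = k * B x z.
Proof. by case: HB => H _; rewrite -[k *: x]addr0 H B0l addr0. Qed.
Lemma BNl x z : B (- x) z = - B x z.
Proof. by rewrite -scaleN1r BZl mulN1r. Qed.
Lemma BDr x y z : B z (x + y) = B z x + B z y.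
Proof. by rewrite Bsym BDl !(Bsym z). Qed.
Lemma BZr k x z : B z (k *: x) = k * B z x.
Proof. by rewrite Bsym BZl Bsym. Qed.
Lemma BNr x z : B z (- x) = - B z x.
Proof. by rewrite Bsym BNl Bsym. Qed.
Lemma B0r z : B z 0 = 0.
Proof. by rewrite Bsym B0l. Qed.
Lemma Bsum n (F : 'I_n -> V) z : B (\sum_(i < n) F i) z = \sum_(i < n) B (F i) z.
Proof. by apply: (big_morph (fun x => B x z)) => [x y|]; rewrite ?BDl ?B0l. Qed.

Lemma brDl x y z : br (x + y) z = br x z + br y z.
Proof. by case: Hbr => H _ _ _; have := H 1 x y z; rewrite !scale1r. Qed.
Lemma br0l z : br 0 z = 0.
Proof. have h := brDl 0 0 z; rewrite addr0 in h; by apply: (addrI (br 0 z)); rewrite addr0 -h. Qed.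
Lemma brZl k x z : br (k *: x) z = k *: br x z.
Proof. by case: Hbr => H _ _ _; rewrite -[k *: x]addr0 H br0l addr0. Qed.
Lemma brNl x z : br (- x) z = - br x z.
Proof. by rewrite -scaleN1r brZl scaleN1r. Qed.
Lemma brDr x y z : br z (x + y) = br z x + br z y.
Proof. by case: Hbr => _ H _ _; have := H 1 z x y; rewrite !scale1r. Qed.
Lemma br0r z : br z 0 = 0.
Proof. have h := brDr 0 0 z; rewrite addr0 in h; by apply: (addrI (br z 0)); rewrite addr0 -h. Qed.
Lemma brZr k x z : br z (k *: x) = k *: br z x.
Proof. by case: Hbr => _ H _ _; rewrite -[k *: x]addr0 H br0r addr0. Qed.
Lemma brNr x z : br z (- x) = - br z x.
Proof. by rewrite -scaleN1r brZr scaleN1r. Qed.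
Lemma brxx x : br x x = 0. Proof. by case: Hbr. Qed.
Lemma brA x y : br y x = - br x y.
Proof.
have := brxx (x + y); rewrite brDl !brDr !brxx add0r addr0 => /eqP.
by rewrite addr_eq0 => /eqP ->; rewrite opprK.
Qed.
Lemma brcl x y z : br (br x y) z = 0. Proof. exact: Hnil. Qed.
Lemma brcr x y z : br z (br x y) = 0. Proof. by rewrite brA brcl oppr0. Qed.
Lemma Bcc p q r s : B (br p q) (br r s) = 0.
Proof. by rewrite Hinv brcr B0r oppr0. Qed.
Lemma Talt x y z : B (br x y) z = - B (br x z) y.
Proof. by rewrite Hinv Bsym. Qed.
Lemma T0r x y : B (br x y) y = 0.
Proof. have := Talt x y y; lra. Qed.
Lemma T0l x y : B (br x y) x = 0.
Proof. by rewrite brA BNl T0r oppr0. Qed.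
Lemma TC x y z : B (br x y) z = B (br y z) x.
Proof.
rewrite (Talt x y z) (brA z x) BNl opprK (Talt z x y) (brA y z) BNl.
by rewrite opprK.
Qed.


Hypothesis Hdim : \dim (fullv : {vspace V}) = 6%N.
Section Build.
Ltac lin := rewrite ?(BDl, BDr, BZl, BZr, BNl, BNr, B0l, B0r).
Ltac brlin := rewrite ?(brDl, brDr, brZl, brZr, brNl, brNr, brcl, brcr, brxx, scaler0, addr0, add0r, oppr0).
Variables a b c : V.
Hypotheses (Haa : B a a = 0) (Hbb : B b b = 0) (Hcc : B c c = 0)
  (Hab : B a b = 0) (Hbc : B b c = 0) (Hac : B a c = 0) (Habc : B (br a b) c = 1).

Lemma Hba : B b a = 0. Proof. by rewrite Bsym. Qed.
Lemma Hcb : B c b = 0. Proof. by rewrite Bsym. Qed.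
Lemma Hca : B c a = 0. Proof. by rewrite Bsym. Qed.
Lemma Hbca : B (br b c) a = 1. Proof. by rewrite -TC. Qed.
Lemma Hcab : B (br c a) b = 1. Proof. by rewrite -TC Hbca. Qed.

Ltac gram := rewrite ?Bcc ?[B _ (br _ _)]Bsym ?T0l ?T0r ?Habc ?Hbca ?Hcab
  ?Haa ?Hbb ?Hcc ?Hab ?Hba ?Hbc ?Hcb ?Hac ?Hca.

Lemma freeX : free (in_tuple [:: a; b; c; br b c; br c a; br a b]).
Proof.
apply/freeP => k Hk.
have T t := congr1 (fun z => B z t) Hk.
have h0 := T (br b c); have h1 := T (br c a); have h2 := T (br a b).
have h3 := T a; have h4 := T b; have h5 := T c.
move: h0 h1 h2 h3 h4 h5; rewrite /= !Bsum !B0l !big_ord_recl !big_ord0 /=.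
lin; gram; rewrite ?(mulr0, mulr1, addr0, add0r) => h0 h1 h2 h3 h4 h5.
case=> -[|[|[|[|[|[|i]]]]]] Hi //.
- by have -> : Ordinal Hi = ord0 by apply: val_inj.
- by have -> : Ordinal Hi = lift ord0 ord0 by apply: val_inj.
- by have -> : Ordinal Hi = lift ord0 (lift ord0 ord0) by apply: val_inj.
- by have -> : Ordinal Hi = lift ord0 (lift ord0 (lift ord0 ord0)) by apply: val_inj.
- by have -> : Ordinal Hi = lift ord0 (lift ord0 (lift ord0 (lift ord0 ord0))) by apply: val_inj.
- by have -> : Ordinal Hi = lift ord0 (lift ord0 (lift ord0 (lift ord0 (lift ord0 ord0)))) by apply: val_inj.
Qed.

Lemma ext0 y : B y (br b c) = 0 -> B y (br c a) = 0 -> B y (br a b) = 0 ->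
  B y a = 0 -> B y b = 0 -> B y c = 0 -> y = 0.
Proof.
set X := in_tuple [:: a; b; c; br b c; br c a; br a b].
have spanX : y \in <<X>>%VS.
  have /eqP -> : (<<X>> == fullv)%VS.
    rewrite eqEdim subvf /= Hdim; have := freeX; rewrite /free => /eqP ->.
    done.
  exact: memvf.
have Ey := coord_span spanX.
rewrite !big_ord_recl big_ord0 /= in Ey.
rewrite {1 2 3 4 5 6}Ey; lin; gram; rewrite ?(mulr0, mulr1, addr0, add0r).
move=> h0 h1 h2 h3 h4 h5.
by rewrite Ey h0 h1 h2 h3 h4 h5 !scale0r !addr0.
Qed.

Lemma expand x : x = B x (br b c) *: a + B x (br c a) *: b + B x (br a b) *: c
  + B x a *: br b c + B x b *: br c a + B x c *: br a b.
Proof.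
apply/eqP; rewrite -subr_eq0; apply/eqP; apply: ext0; lin; gram; ring.
Qed.


Lemma brE x y : br x y =
  (B x (br b c) * B y (br c a) - B x (br c a) * B y (br b c)) *: br a b +
  (B x (br c a) * B y (br a b) - B x (br a b) * B y (br c a)) *: br b c +
  (B x (br a b) * B y (br b c) - B x (br b c) * B y (br a b)) *: br c a.
Proof.
rewrite {1}(expand x) {1}(expand y); brlin.
rewrite (brA a b) (brA b c) (brA c a).
apply/eqP; rewrite -subr_eq0; apply/eqP; apply: ext0; lin; gram; ring.
Qed.

Definition phi (x : V) : b6 R :=
  (\row_(j < 3) nth 0 [:: B x (br b c); B x (br c a); B x c] j,
   \row_(j < 3) nth 0 [:: B x a; B x b; B x (br a b)] j).

Definition psi (p : b6 R) : V :=
  p.1 0 0 *: a + p.1 0 1 *: b + p.1 0 2 *: br a b +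
  p.2 0 0 *: br b c + p.2 0 1 *: br c a + p.2 0 2 *: c.

Lemma phi_lin k x y : phi (k *: x + y) =
  (k *: (phi x).1 + (phi y).1, k *: (phi x).2 + (phi y).2).
Proof.
congr pair; apply/rowP => j; rewrite !mxE; case: j => -[|[|[|j]]] Hj //=; by lin.
Qed.

Lemma psi_phi x : psi (phi x) = x.
Proof.
rewrite /psi /phi /= !mxE /=.
apply/eqP; rewrite -subr_eq0; apply/eqP; apply: ext0; lin; gram; ring.
Qed.

Lemma phi_psi p : phi (psi p) = p.
Proof.
case: p => p1 p2; rewrite /phi; congr pair; apply/rowP => j; rewrite !mxE;
  case: j => -[|[|[|j]]] Hj //=; rewrite /psi /=; lin; gram; rewrite ?(mulr0, mulr1, addr0, add0r);
  by congr (_ _ _); apply: val_inj.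
Qed.

Lemma phi_form x y : b6form (phi x) (phi y) = B x y.
Proof.
rewrite /b6form /dpair /phi /= !big_ord_recl !big_ord0 /= !mxE /=.
rewrite [in RHS](expand x) [in RHS](expand y); lin; gram; ring.
Qed.

Lemma phi_br x y : phi (br x y) = b6br (phi x) (phi y).
Proof.
rewrite /b6br /h3br /adstar /dpair /phi /=; congr pair; apply/rowP => j;
  rewrite !mxE; case: j => -[|[|[|j]]] Hj //=; rewrite ?big_ord_recl ?big_ord0 /= ?mxE /=;
  rewrite brE; lin; gram; ring.
Qed.

Lemma build : exists f : V -> b6 R, isometric_iso br B f.
Proof.
exists phi; split.
- exact: phi_lin.
- by exists psi; [exact: psi_phi | exact: phi_psi].
- exact: phi_br.
- exact: phi_form.
Qed.
End Build.
Ltac lin := rewrite ?(BDl, BDr, BZl, BZr, BNl, BNr, B0l, B0r).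
Ltac brlin := rewrite ?(brDl, brDr, brZl, brZr, brNl, brNr, brcl, brcr, brxx, scaler0, addr0, add0r, oppr0).

Lemma adjust a0 b0 c0 : B (br a0 b0) c0 = 1 -> exists a b c,
  B a a = 0 /\ B b b = 0 /\ B c c = 0 /\ B a b = 0 /\ B b c = 0 /\ B a c = 0 /\
  B (br a b) c = 1.
Proof.
move=> H; have H2 : B (br b0 c0) a0 = 1 by rewrite -TC.
have H3 : B (br c0 a0) b0 = 1 by rewrite -TC H2.
exists (a0 - (B a0 a0 / 2) *: br b0 c0),
  (b0 - (B b0 b0 / 2) *: br c0 a0 - B a0 b0 *: br b0 c0),
  (c0 - (B c0 c0 / 2) *: br a0 b0 - B a0 c0 *: br b0 c0 - B b0 c0 *: br c0 a0).
do ![split]; brlin; lin;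
  rewrite ?Bcc ?[B _ (br _ _)]Bsym ?T0l ?T0r ?H ?H2 ?H3 ?(Bsym b0 a0) ?(Bsym c0 a0) ?(Bsym c0 b0);
  by field.
Qed.

End Basic.

Theorem corollary5p5 (R : realType) (V : vectType R)
    (br : V -> V -> V) (B : V -> V -> R) :
  butterfly_algebra br B -> exists phi : V -> b6 R, isometric_iso br B phi.
Proof.
move=> [Hdim [Hbr [Hnil _]] HB Hinv [Z [[n [xs [ys HZ]]] Hrad]]].
have [W HW] : exists W, B Z W != 0.
  move: Hrad; rewrite /in_radical => /not_all_ex_not [W HW].
  by exists W; apply/eqP.
have [i Hi] : exists i, B (br (xs i) (ys i)) W != 0.
  case: (boolP [exists i, B (br (xs i) (ys i)) W != 0]) => [/existsP //|].
  rewrite negb_exists => /forallP Hall; exfalso; move: HW.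
  rewrite HZ (Bsum HB) big1 ?eqxx // => j _; apply/eqP; move: (Hall j).
  by rewrite negbK => /eqP ->.
set t := B (br (xs i) (ys i)) W.
have H1 : B (br (t^-1 *: xs i) (ys i)) W = 1.
  by rewrite (brZl Hbr) (BZl HB) mulVf.
have [a [b [c [Haa [Hbb [Hcc [Hab [Hbc [Hac Habc]]]]]]]]] :=
  adjust Hbr Hnil HB Hinv H1.
exact: (build Hbr Hnil HB Hinv Hdim Haa Hbb Hcc Hab Hbc Hac Habc).
Qed.
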